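(* Let $\beta:=\frac{1}{2\pi}\int_{-\infty}^{\infty}\prod_{k=1}^\infty\frac{k^{2\alpha}}{k^{2\alpha}+t^2}\,dt$, which is a finite positive constant depending only on $\alpha$. Then as $i,j\to\infty$, \[ \Pr[BINGO(i,j)]\sim\beta\,\bigl(i^{-\alpha}+j^{-\alpha}\bigr). \] In particular $\Pr[BINGO(n,n)]\sim 2\beta n^{-\alpha}$ as $n\to\infty$.
   Context: Fix $\alpha>1$. Let $(X_k,Y_k)_{k\ge2}$ be the Markov chain on $\mathbb N\times\mathbb N$ with $(X_2,Y_2)=(1,1)$ and, from state $(i,j)$, moving to $(i+1,j)$ with probability $i^\alpha/(i^\alpha+j^\alpha)$ and to $(i,j+1)$ with probability $j^\alpha/(i^\alpha+j^\alpha)$. $BINGO(i,j)$ is the event that the chain visits the state $(i,j)$. *)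

(* Defs.v *)
From Stdlib Require Import Reals Lra.
Open Scope R_scope.

Definition npow (n : nat) (a : R) : R := Rpower (INR n) a.

(* probability of stepping (i,j) -> (i+1,j) *)
Definition pstepX (alpha : R) (i j : nat) : R :=
  npow i alpha / (npow i alpha + npow j alpha).
Definition pstepY (alpha : R) (i j : nat) : R :=
  npow j alpha / (npow i alpha + npow j alpha).

(* bingo alpha i j = Pr[BINGO(i,j)] for i, j >= 1: the chain started at (1,1)
   moves by exactly one unit step each time, so it visits (i,j) iff it is at
   (i,j) at time i+j; hence the probability satisfies the forward recursion
   P(1,1) = 1,
   P(i,j) = P(i-1,j) * pstepX(i-1,j) + P(i,j-1) * pstepY(i,j-1),
   with P = 0 when a coordinate is 0. *)
Fixpoint bingo (alpha : R) (i : nat) : nat -> R :=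
  match i with
  | O => fun _ => 0
  | S i' =>
      fix bj (j : nat) : R :=
        match j with
        | O => 0
        | S j' =>
            match i', j' with
            | O, O => 1
            | _, _ => bingo alpha i' (S j') * pstepX alpha i' (S j')
                      + bj j' * pstepY alpha (S i') j'
            end
        end
  end.

Fixpoint partial_prod (alpha t : R) (n : nat) : R :=
  match n with
  | O => 1
  | S m => partial_prod alpha t m *
           (npow (S m) (2 * alpha) / (npow (S m) (2 * alpha) + t ^ 2))
  end.

Definition improper_integral_R (f : R -> R) (l : R) : Prop :=
  (forall a b, inhabited (Riemann_integrable f a b)) /\
  forall eps, 0 < eps -> exists M, forall a b, a <= - M -> M <= b ->
    exists pr : Riemann_integrable f a b, Rabs (RiemannInt pr - l) < eps.

Example bingo_11 (a : R) : bingo a 1 1 = 1. Proof. reflexivity. Qed.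

(* Main.v *)
Require Import Defs.
From Stdlib Require Import Reals Lra Lia List.
From Coquelicot Require Import Coquelicot.
Open Scope R_scope.

Definition aa (al : R) (k : nat) : R := npow k al.

Lemma aa_pos al k : 0 < aa al k.
Proof. unfold aa, npow, Rpower. apply exp_pos. Qed.

Lemma aa_1 al : aa al 1 = 1.
Proof. unfold aa, npow, Rpower. simpl. rewrite ln_1, Rmult_0_r. apply exp_0. Qed.

Lemma aa_lt al k l : 0 < al -> (1 <= k)%nat -> (k < l)%nat -> aa al k < aa al l.
Proof.
  intros Ha Hk Hl. unfold aa, npow. apply Rlt_Rpower_l; auto. split.
  - apply lt_0_INR; lia.
  - apply lt_INR; lia.
Qed.

Lemma aa_ge1 al k : 0 < al -> (1 <= k)%nat -> 1 <= aa al k.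
Proof.
  intros Ha Hk. destruct (Nat.eq_dec k 1) as [->|Hn].
  - rewrite aa_1; lra.
  - left. rewrite <- (aa_1 al). apply aa_lt; auto; lia.
Qed.

Definition fX (c t : R) : C := (c^2/(c^2+t^2), c*t/(c^2+t^2)).
Definition fY (c t : R) : C := (c^2/(c^2+t^2), -(c*t)/(c^2+t^2)).

Lemma den_pos c t : 0 < c -> 0 < c^2 + t^2.
Proof. intros. nra. Qed.

Lemma fac_id c d t : 0 < c -> 0 < d ->
  Cmult (RtoC (/c + /d)) (Cmult (fX c t) (fY d t)) =
  Cplus (Cmult (RtoC (/d)) (fY d t)) (Cmult (RtoC (/c)) (fX c t)).
Proof.
  intros Hc Hd. pose proof (den_pos c t Hc). pose proof (den_pos d t Hd).
  unfold fX, fY, Cmult, Cplus, RtoC; simpl. f_equal; field; lra.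
Qed.
Fixpoint Lf (al : R) (i : nat) (t : R) : C :=
  match i with O => RtoC 1 | S i' => Cmult (Lf al i' t) (fX (aa al (S i')) t) end.
Fixpoint Rf (al : R) (j : nat) (t : R) : C :=
  match j with O => RtoC 1 | S j' => Cmult (Rf al j' t) (fY (aa al (S j')) t) end.
Definition Phi al i j t := Cmult (Lf al i t) (Rf al j t).
Definition g al i j t := fst (Phi al i j t).

Lemma Phi_rec al i j t : 
  Cmult (RtoC (/aa al (S i) + /aa al (S j))) (Phi al (S i) (S j) t) =
  Cplus (Cmult (RtoC (/aa al (S j))) (Phi al i (S j) t))
        (Cmult (RtoC (/aa al (S i))) (Phi al (S i) j t)).
Proof.
  unfold Phi; simpl.
  set (x := Lf al i t). set (y := Rf al j t).
  set (c := aa al (S i)). set (d := aa al (S j)).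
  pose proof (fac_id c d t (aa_pos _ _) (aa_pos _ _)) as H.
  transitivity (Cmult (Cmult x y) (Cmult (RtoC (/c + /d)) (Cmult (fX c t) (fY d t)))).
  { ring. }
  rewrite H. ring.
Qed.

Lemma g_rec al i j t :
  (/aa al (S i) + /aa al (S j)) * g al (S i) (S j) t =
  /aa al (S j) * g al i (S j) t + /aa al (S i) * g al (S i) j t.
Proof.
  unfold g. pose proof (f_equal fst (Phi_rec al i j t)) as H.
  rewrite re_plus, !re_scal_l in H. exact H.
Qed.

Lemma fXfY c t : 0 < c -> Cmult (fX c t) (fY c t) = RtoC (c^2/(c^2+t^2)).
Proof.
  intros Hc. pose proof (den_pos c t Hc).
  unfold fX, fY, Cmult, RtoC; simpl. f_equal; field; lra.
Qed.

Lemma npow2 k al : npow k (2*al) = (npow k al)^2.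
Proof. unfold npow. replace (2*al) with (al+al) by ring. rewrite Rpower_plus. ring. Qed.

Lemma Phi_diag al m t : Phi al m m t = RtoC (partial_prod al t m).
Proof.
  induction m as [|m IH].
  - unfold Phi; simpl. unfold RtoC, Cmult; simpl. f_equal; ring.
  - unfold Phi in *; simpl.
    transitivity (Cmult (Cmult (Lf al m t) (Rf al m t)) (Cmult (fX (aa al (S m)) t) (fY (aa al (S m)) t))).
    { ring. }
    rewrite IH, fXfY by apply aa_pos.
    rewrite npow2. unfold aa. unfold RtoC, Cmult; simpl. f_equal; ring.
Qed.

Lemma Phi_11 al t : Phi al 1 1 t = RtoC (/(1+t^2)).
Proof.
  unfold Phi; simpl. rewrite aa_1.
  transitivity (Cmult (fX 1 t) (fY 1 t)). { ring. }
  rewrite fXfY by lra. f_equal. field. nra.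
Qed.
Lemma div_le1 x D : 0 < D -> x <= D -> x / D <= 1.
Proof.
  intros HD Hx. unfold Rdiv. rewrite <- (Rinv_r D) by lra.
  apply Rmult_le_compat_r; [left; apply Rinv_0_lt_compat|]; lra.
Qed.

Lemma Cmod_le_of (x : C) b : 0 <= b -> fst x ^ 2 + snd x ^ 2 <= b ^ 2 -> Cmod x <= b.
Proof.
  intros Hb H. unfold Cmod. rewrite <- (sqrt_pow2 b Hb). apply sqrt_le_1_alt. exact H.
Qed.

Lemma fX_le1 c t : 0 < c -> Cmod (fX c t) <= 1.
Proof.
  intros Hc. pose proof (den_pos c t Hc). apply Cmod_le_of; [lra|]. unfold fX; cbn [fst snd].
  replace ((c ^ 2 / (c ^ 2 + t ^ 2)) ^ 2 + (c * t / (c ^ 2 + t ^ 2)) ^ 2) with (c^2/(c^2+t^2))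
   by (field; lra).
  rewrite pow1; apply div_le1; nra.
Qed.

Lemma fY_le1 c t : 0 < c -> Cmod (fY c t) <= 1.
Proof.
  intros Hc. pose proof (den_pos c t Hc). apply Cmod_le_of; [lra|]. unfold fY; cbn [fst snd].
  replace ((c ^ 2 / (c ^ 2 + t ^ 2)) ^ 2 + (- (c * t) / (c ^ 2 + t ^ 2)) ^ 2) with (c^2/(c^2+t^2))
   by (field; lra).
  rewrite pow1; apply div_le1; nra.
Qed.

Lemma fX_m1 c t : 0 < c -> Cmod (Cminus (fX c t) 1) <= Rabs t / c.
Proof.
  intros Hc. pose proof (den_pos c t Hc).
  apply Cmod_le_of. { apply Rmult_le_pos; [apply Rabs_pos| left; apply Rinv_0_lt_compat; lra]. }
  unfold fX, Cminus, Cplus, Copp, RtoC; cbn [fst snd].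
  replace ((c ^ 2 / (c ^ 2 + t ^ 2) + - (1)) ^ 2 + (c * t / (c ^ 2 + t ^ 2) + - (0)) ^ 2)
    with (t^2/(c^2+t^2)) by (field; lra).
  replace ((Rabs t / c)^2) with (t^2/c^2).
  2:{ unfold Rdiv. rewrite Rpow_mult_distr, pow2_abs, pow_inv. reflexivity. }
  unfold Rdiv. apply Rmult_le_compat_l. { nra. }
  apply Rinv_le_contravar; nra.
Qed.

Lemma fY_m1 c t : 0 < c -> Cmod (Cminus (fY c t) 1) <= Rabs t / c.
Proof.
  intros Hc. pose proof (den_pos c t Hc).
  apply Cmod_le_of. { apply Rmult_le_pos; [apply Rabs_pos| left; apply Rinv_0_lt_compat; lra]. }
  unfold fY, Cminus, Cplus, Copp, RtoC; cbn [fst snd].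
  replace ((c ^ 2 / (c ^ 2 + t ^ 2) + - (1)) ^ 2 + (- (c * t) / (c ^ 2 + t ^ 2) + - (0)) ^ 2)
    with (t^2/(c^2+t^2)) by (field; lra).
  replace ((Rabs t / c)^2) with (t^2/c^2).
  2:{ unfold Rdiv. rewrite Rpow_mult_distr, pow2_abs, pow_inv. reflexivity. }
  unfold Rdiv. apply Rmult_le_compat_l. { nra. }
  apply Rinv_le_contravar; nra.
Qed.

Lemma Lf_le1 al i t : Cmod (Lf al i t) <= 1.
Proof.
  induction i as [|i IH]; simpl.
  - rewrite Cmod_1; lra.
  - rewrite Cmod_mult. pose proof (fX_le1 (aa al (S i)) t (aa_pos _ _)).
    pose proof (Cmod_ge_0 (Lf al i t)). pose proof (Cmod_ge_0 (fX (aa al (S i)) t)). nra.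
Qed.

Lemma Rf_le1 al i t : Cmod (Rf al i t) <= 1.
Proof.
  induction i as [|i IH]; simpl.
  - rewrite Cmod_1; lra.
  - rewrite Cmod_mult. pose proof (fY_le1 (aa al (S i)) t (aa_pos _ _)).
    pose proof (Cmod_ge_0 (Rf al i t)). pose proof (Cmod_ge_0 (fY (aa al (S i)) t)). nra.
Qed.

Lemma Lf_le_first al i t : (1 <= i)%nat -> Cmod (Lf al i t) <= Cmod (fX 1 t).
Proof.
  induction i as [|i IH]; intros Hi; [lia|].
  destruct i as [|i].
  - simpl. rewrite aa_1, Cmult_1_l. lra.
  - change (Lf al (S (S i)) t) with (Cmult (Lf al (S i) t) (fX (aa al (S (S i))) t)).
    rewrite Cmod_mult. pose proof (fX_le1 (aa al (S (S i))) t (aa_pos _ _)).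
    pose proof (IH ltac:(lia)).
    pose proof (Cmod_ge_0 (Lf al (S i) t)). pose proof (Cmod_ge_0 (fX (aa al (S (S i))) t)). nra.
Qed.
Lemma Rf_le_first al i t : (1 <= i)%nat -> Cmod (Rf al i t) <= Cmod (fY 1 t).
Proof.
  induction i as [|i IH]; intros Hi; [lia|].
  destruct i as [|i].
  - simpl. rewrite aa_1, Cmult_1_l. lra.
  - change (Rf al (S (S i)) t) with (Cmult (Rf al (S i) t) (fY (aa al (S (S i))) t)).
    rewrite Cmod_mult. pose proof (fY_le1 (aa al (S (S i))) t (aa_pos _ _)).
    pose proof (IH ltac:(lia)).
    pose proof (Cmod_ge_0 (Rf al (S i) t)). pose proof (Cmod_ge_0 (fY (aa al (S (S i))) t)). nra.
Qed.

Lemma inv1t2_pos t : 0 < /(1+t^2).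
Proof. apply Rinv_0_lt_compat. nra. Qed.

Lemma Phi_bound al i j t : (1 <= i)%nat -> (1 <= j)%nat -> Cmod (Phi al i j t) <= /(1+t^2).
Proof.
  intros Hi Hj. unfold Phi. rewrite Cmod_mult.
  replace (/(1+t^2)) with (Cmod (fX 1 t) * Cmod (fY 1 t)).
  2:{ rewrite <- Cmod_mult, fXfY by lra. rewrite Cmod_R. rewrite Rabs_pos_eq.
      - field. nra.
      - apply Rmult_le_pos; [nra|left; apply Rinv_0_lt_compat; nra]. }
  apply Rmult_le_compat; try apply Cmod_ge_0.
  - apply Lf_le_first; auto.
  - apply Rf_le_first; auto.
Qed.

Lemma g_bound al i j t : (1 <= i)%nat -> (1 <= j)%nat -> Rabs (g al i j t) <= /(1+t^2).
Proof.
  intros. eapply Rle_trans; [apply re_le_Cmod|]. apply Phi_bound; auto.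
Qed.

Fixpoint sa (al : R) (n : nat) : R :=
  match n with O => 0 | S n' => sa al n' + / aa al (S n') end.

Lemma sa_mono al m i : (m <= i)%nat -> sa al m <= sa al i.
Proof.
  induction 1; [lra|]. simpl. pose proof (aa_pos al (S m0)).
  pose proof (Rinv_0_lt_compat _ H0). lra.
Qed.

Lemma Lf_diff al m i t : (m <= i)%nat ->
  Cmod (Cminus (Lf al i t) (Lf al m t)) <= Rabs t * (sa al i - sa al m).
Proof.
  induction 1.
  - replace (Cminus (Lf al m t) (Lf al m t)) with (RtoC 0) by ring.
    rewrite Cmod_R, Rabs_R0. nra.
  - simpl.
    replace (Cminus (Cmult (Lf al m0 t) (fX (aa al (S m0)) t)) (Lf al m t)) with
      (Cplus (Cminus (Lf al m0 t) (Lf al m t)) (Cmult (Lf al m0 t) (Cminus (fX (aa al (S m0)) t) 1)))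
      by ring.
    eapply Rle_trans; [apply Cmod_triangle|]. rewrite Cmod_mult.
    pose proof (fX_m1 (aa al (S m0)) t (aa_pos _ _)).
    pose proof (Lf_le1 al m0 t). pose proof (Cmod_ge_0 (Lf al m0 t)).
    pose proof (Cmod_ge_0 (Cminus (fX (aa al (S m0)) t) 1)).
    assert (Cmod (Lf al m0 t) * Cmod (Cminus (fX (aa al (S m0)) t) 1) <= Rabs t / aa al (S m0)) by nra.
    unfold Rdiv in H4. lra.
Qed.

Lemma Rf_diff al m i t : (m <= i)%nat ->
  Cmod (Cminus (Rf al i t) (Rf al m t)) <= Rabs t * (sa al i - sa al m).
Proof.
  induction 1.
  - replace (Cminus (Rf al m t) (Rf al m t)) with (RtoC 0) by ring.
    rewrite Cmod_R, Rabs_R0. nra.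
  - simpl.
    replace (Cminus (Cmult (Rf al m0 t) (fY (aa al (S m0)) t)) (Rf al m t)) with
      (Cplus (Cminus (Rf al m0 t) (Rf al m t)) (Cmult (Rf al m0 t) (Cminus (fY (aa al (S m0)) t) 1)))
      by ring.
    eapply Rle_trans; [apply Cmod_triangle|]. rewrite Cmod_mult.
    pose proof (fY_m1 (aa al (S m0)) t (aa_pos _ _)).
    pose proof (Rf_le1 al m0 t). pose proof (Cmod_ge_0 (Rf al m0 t)).
    pose proof (Cmod_ge_0 (Cminus (fY (aa al (S m0)) t) 1)).
    assert (Cmod (Rf al m0 t) * Cmod (Cminus (fY (aa al (S m0)) t) 1) <= Rabs t / aa al (S m0)) by nra.
    unfold Rdiv in H4. lra.
Qed.

Lemma Phi_diff al m i j t : (m <= i)%nat -> (m <= j)%nat ->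
  Cmod (Cminus (Phi al i j t) (Phi al m m t)) <= Rabs t * ((sa al i - sa al m) + (sa al j - sa al m)).
Proof.
  intros Hi Hj. unfold Phi.
  replace (Cminus (Cmult (Lf al i t) (Rf al j t)) (Cmult (Lf al m t) (Rf al m t))) with
    (Cplus (Cmult (Cminus (Lf al i t) (Lf al m t)) (Rf al j t))
           (Cmult (Lf al m t) (Cminus (Rf al j t) (Rf al m t)))) by ring.
  eapply Rle_trans; [apply Cmod_triangle|]. rewrite !Cmod_mult.
  pose proof (Lf_diff al m i t Hi). pose proof (Rf_diff al m j t Hj).
  pose proof (Lf_le1 al m t). pose proof (Rf_le1 al j t).
  pose proof (Cmod_ge_0 (Lf al m t)). pose proof (Cmod_ge_0 (Rf al j t)).
  pose proof (Cmod_ge_0 (Cminus (Lf al i t) (Lf al m t))).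
  pose proof (Cmod_ge_0 (Cminus (Rf al j t) (Rf al m t))).
  nra.
Qed.
Lemma inv_aa_le al n : 1 < al ->
  / aa al (S (S n)) <= (Rpower (INR (S n)) (1-al) - Rpower (INR (S (S n))) (1-al)) / (al - 1).
Proof.
  intros Hal.
  assert (H0 : 0 < INR (S n)) by (apply lt_0_INR; lia).
  assert (HS : INR (S (S n)) = INR (S n) + 1) by (rewrite S_INR; ring).
  destruct (MVT_cor2 (fun x => Rpower x (1-al)) (fun x => (1-al) * Rpower x (1-al-1))
              (INR (S n)) (INR (S (S n)))) as [xi [Hxi1 Hxi2]].
  { lra. }
  { intros c Hc. apply derivable_pt_lim_power. lra. }
  replace (1-al-1) with (-al) in Hxi1 by ring.
  rewrite Rpower_Ropp in Hxi1.
  replace (Rpower (INR (S n)) (1 - al) - Rpower (INR (S (S n))) (1 - al)) with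
     ((al-1) * / Rpower xi al) by (rewrite HS in Hxi1 |- *; nra).
  replace ((al - 1) * / Rpower xi al / (al - 1)) with (/ Rpower xi al) by (field; split; [|lra];
     unfold Rpower; apply Rgt_not_eq, exp_pos).
  apply Rinv_le_contravar. { unfold Rpower; apply exp_pos. }
  unfold aa, npow. apply Rle_Rpower_l; lra.
Qed.

Lemma Rpower_1b x : Rpower 1 x = 1.
Proof. unfold Rpower. rewrite ln_1, Rmult_0_r. apply exp_0. Qed.

Lemma sa_bound_aux al n : 1 < al ->
  sa al (S n) <= 1 + (1 - Rpower (INR (S n)) (1-al)) / (al - 1).
Proof.
  intros Hal. induction n as [|n IH].
  - simpl sa. rewrite aa_1. simpl INR. rewrite Rpower_1b.
    replace ((1-1)/(al-1)) with 0 by (field; lra). lra.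
  - change (sa al (S (S n))) with (sa al (S n) + / aa al (S (S n))).
    pose proof (inv_aa_le al n Hal).
    replace (1 + (1 - Rpower (INR (S (S n))) (1 - al)) / (al - 1)) with
      (1 + (1 - Rpower (INR (S n)) (1 - al)) / (al - 1) +
       (Rpower (INR (S n)) (1 - al) - Rpower (INR (S (S n))) (1 - al)) / (al - 1))
      by (field; lra).
    lra.
Qed.

Lemma sa_bound al n : 1 < al -> sa al n <= 1 + / (al - 1).
Proof.
  intros Hal. destruct n as [|n].
  - simpl. pose proof (Rinv_0_lt_compat (al-1)). lra.
  - eapply Rle_trans; [apply sa_bound_aux; auto|].
    assert (0 < Rpower (INR (S n)) (1 - al)) by (unfold Rpower; apply exp_pos).
    unfold Rdiv. assert (0 < / (al-1)) by (apply Rinv_0_lt_compat; lra). nra.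
Qed.

Lemma sa_cv al : 1 < al -> { l | Un_cv (sa al) l }.
Proof.
  intros Hal. apply growing_cv.
  - intros n. apply sa_mono. lia.
  - exists (1 + / (al-1)). intros x [n ->]. apply sa_bound; auto.
Qed.

Lemma cv_le_const (u : nat -> R) l B N : Un_cv u l -> (forall n, (N <= n)%nat -> u n <= B) -> l <= B.
Proof.
  intros Hu HB. destruct (Rle_or_lt l B) as [|Hlt]; auto.
  destruct (Hu (l - B)) as [M HM]; [lra|].
  specialize (HM (max M N) ltac:(lia)). specialize (HB (max M N) ltac:(lia)).
  unfold Rdist in HM. apply Rabs_def2 in HM. lra.
Qed.

Lemma cv_ge_const (u : nat -> R) l B N : Un_cv u l -> (forall n, (N <= n)%nat -> B <= u n) -> B <= l.
Proof.
  intros Hu HB. destruct (Rle_or_lt B l) as [|Hlt]; auto.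
  destruct (Hu (B - l)) as [M HM]; [lra|].
  specialize (HM (max M N) ltac:(lia)). specialize (HB (max M N) ltac:(lia)).
  unfold Rdist in HM. apply Rabs_def2 in HM. lra.
Qed.

Lemma cv_abs_le (u : nat -> R) l c B N : Un_cv u l -> (forall n, (N <= n)%nat -> Rabs (u n - c) <= B) ->
  Rabs (l - c) <= B.
Proof.
  intros Hu HB. apply Rabs_le. split; [cut (c - B <= l); [lra|] | cut (l <= c + B); [lra|]].
  - apply (cv_ge_const u l (c - B) N Hu). intros n Hn. specialize (HB n Hn). apply Rabs_le_between in HB. lra.
  - apply (cv_le_const u l (c + B) N Hu). intros n Hn. specialize (HB n Hn). apply Rabs_le_between in HB. lra.
Qed.
Definition CC (f : R -> C) := forall t, continuity_pt (fun s => fst (f s)) t /\ continuity_pt (fun s => snd (f s)) t.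

Lemma CC_mult f h : CC f -> CC h -> CC (fun s => Cmult (f s) (h s)).
Proof.
  intros Hf Hh t. destruct (Hf t) as [f1 f2]. destruct (Hh t) as [h1 h2].
  unfold Cmult; cbn [fst snd]. split.
  - apply (continuity_pt_minus (fun s => fst (f s) * fst (h s)) (fun s => snd (f s) * snd (h s))).
    + apply (continuity_pt_mult (fun s => fst (f s)) (fun s => fst (h s))); auto.
    + apply (continuity_pt_mult (fun s => snd (f s)) (fun s => snd (h s))); auto.
  - apply (continuity_pt_plus (fun s => fst (f s) * snd (h s)) (fun s => snd (f s) * fst (h s))).
    + apply (continuity_pt_mult (fun s => fst (f s)) (fun s => snd (h s))); auto.
    + apply (continuity_pt_mult (fun s => snd (f s)) (fun s => fst (h s))); auto.
Qed.

Lemma CC_const z : CC (fun _ => z).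
Proof. intros t; split; apply continuity_pt_const; intros x y; reflexivity. Qed.

Lemma CC_fX c : 0 < c -> CC (fX c).
Proof.
  intros Hc t. unfold fX; cbn [fst snd]. split; apply derivable_continuous_pt; apply ex_derive_Reals_0; auto_derive;
  pose proof (den_pos c t Hc); lra.
Qed.

Lemma CC_fY c : 0 < c -> CC (fY c).
Proof.
  intros Hc t. unfold fY; cbn [fst snd]. split; apply derivable_continuous_pt; apply ex_derive_Reals_0; auto_derive;
  pose proof (den_pos c t Hc); lra.
Qed.

Lemma CC_Lf al i : CC (Lf al i).
Proof.
  induction i as [|i IH]; simpl.
  - apply CC_const.
  - apply CC_mult; auto. apply CC_fX, aa_pos.
Qed.

Lemma CC_Rf al i : CC (Rf al i).
Proof.
  induction i as [|i IH]; simpl.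
  - apply CC_const.
  - apply CC_mult; auto. apply CC_fY, aa_pos.
Qed.

Lemma g_cont al i j t : continuous (g al i j) t.
Proof.
  apply continuity_pt_filterlim.
  unfold g, Phi. apply (CC_mult (Lf al i) (Rf al j) (CC_Lf al i) (CC_Rf al j) t).
Qed.

Lemma g_int al i j a b : ex_RInt (g al i j) a b.
Proof. apply (ex_RInt_continuous (V:=R_CompleteNormedModule)). intros; apply g_cont. Qed.
Definition h1 (t : R) := /(1+t^2).

Lemma h1_cont t : continuity_pt h1 t.
Proof. unfold h1. apply derivable_continuous_pt; apply ex_derive_Reals_0; auto_derive. nra. Qed.

Lemma h1_int a b : ex_RInt h1 a b.
Proof.
  apply (ex_RInt_continuous (V:=R_CompleteNormedModule)). intros.
  apply continuity_pt_filterlim, h1_cont.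
Qed.

Lemma int_h1 x y : RInt h1 x y = atan y - atan x.
Proof.
  apply is_RInt_unique.
  apply (is_RInt_derive (V:=R_CompleteNormedModule) atan h1).
  - intros t _. pose proof (is_derive_atan t) as H. unfold h1. unfold Rsqr in H.
    replace (t^2) with (t*t) by ring. exact H.
  - intros t _. apply continuity_pt_filterlim, h1_cont.
Qed.

Lemma atan_lim eps : 0 < eps -> exists M, 0 < M /\ forall x, M <= x -> PI/2 - atan x < eps.
Proof.
  intros He.
  assert (Hc : continuity_pt atan 0) by (apply derivable_continuous_pt, derivable_pt_atan).
  destruct (Hc eps He) as [d [Hd Hdd]].
  exists (2 / d). split. { apply Rdiv_lt_0_compat; lra. }
  intros x Hx. assert (Hx0 : 0 < x) by (apply Rlt_le_trans with (2/d); auto; apply Rdiv_lt_0_compat; lra).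
  rewrite <- (atan_inv x Hx0).
  assert (H1 : 0 < / x) by (apply Rinv_0_lt_compat; lra).
  assert (H2 : / x < d).
  { apply Rle_lt_trans with (/ (2/d)). apply Rinv_le_contravar; [apply Rdiv_lt_0_compat; lra|lra].
    replace (/ (2/d)) with (d/2) by (field; lra). lra. }
  specialize (Hdd (/ x)). simpl in Hdd. unfold R_dist in Hdd. rewrite atan_0, !Rminus_0_r in Hdd.
  assert (Rabs (atan (/x)) < eps).
  { apply Hdd. split. { unfold D_x, no_cond. split; auto. lra. }
    rewrite Rabs_pos_eq; lra. }
  apply Rabs_def2 in H. lra.
Qed.

Lemma RInt_abs_bound f h a b : a <= b -> ex_RInt f a b -> ex_RInt h a b ->
  (forall t, a <= t <= b -> Rabs (f t) <= h t) -> Rabs (RInt f a b) <= RInt h a b.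
Proof.
  intros Hab Hf Hh Hb. eapply Rle_trans; [apply abs_RInt_le; auto|].
  apply RInt_le; auto.
  - apply (ex_RInt_norm f a b Hf).
  - intros x Hx. apply Hb. lra.
Qed.

Lemma tail_bound f a b M : a <= -M -> 0 <= M -> M <= b ->
  (forall x y, ex_RInt f x y) -> (forall t, Rabs (f t) <= h1 t) ->
  Rabs (RInt f a b - RInt f (-M) M) <= PI - 2 * atan M.
Proof.
  intros Ha HM Hb Hint Hf.
  rewrite <- (RInt_Chasles f a (-M) b) by auto.
  rewrite <- (RInt_Chasles f (-M) M b) by auto.
  change (plus (RInt f a (- M)) (plus (RInt f (- M) M) (RInt f M b))) with
     (RInt f a (- M) + (RInt f (- M) M + RInt f M b)).
  replace (RInt f a (- M) + (RInt f (- M) M + RInt f M b) - RInt f (- M) M) with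
    (RInt f a (- M) + RInt f M b) by ring.
  eapply Rle_trans; [apply Rabs_triang|].
  assert (H1 : Rabs (RInt f a (-M)) <= RInt h1 a (-M)).
  { apply RInt_abs_bound; auto. apply h1_int. }
  assert (H2 : Rabs (RInt f M b) <= RInt h1 M b).
  { apply RInt_abs_bound; auto. apply h1_int. }
  rewrite int_h1 in H1, H2. rewrite atan_opp in H1.
  pose proof (atan_bound a). pose proof (atan_bound b). lra.
Qed.
Lemma cv_const k : Un_cv (fun _ => k) k.
Proof. intros e He. exists O. intros. unfold Rdist. rewrite Rminus_eq_0, Rabs_R0. lra. Qed.

Lemma cv_ext (u v : nat -> R) l : (forall n, u n = v n) -> Un_cv u l -> Un_cv v l.
Proof. intros H Hu e He. destruct (Hu e He) as [N HN]. exists N. intros n Hn. rewrite <- H. auto. Qed.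

Lemma cv_scal k (u : nat -> R) l : Un_cv u l -> Un_cv (fun n => k * u n) (k * l).
Proof. intros H. apply CV_mult; auto. apply cv_const. Qed.

Definition q (c u : R) : C := (c/(c^2+u^2), -u/(c^2+u^2)).
Fixpoint Q (l : list R) (t : R) : C :=
  match l with nil => RtoC 1 | c :: r => Cmult (q c t) (Q r t) end.

Lemma q_pf c1 c2 t : 0 < c1 -> 0 < c2 -> c1 <> c2 ->
  Cmult (q c1 t) (q c2 t) = Cmult (RtoC (/(c2 - c1))) (Cminus (q c1 t) (q c2 t)).
Proof.
  intros H1 H2 H12. pose proof (den_pos c1 t H1). pose proof (den_pos c2 t H2).
  assert (c2 - c1 <> 0) by lra.
  unfold q, Cmult, Cminus, Cplus, Copp, RtoC; cbn [fst snd]. f_equal; field; lra.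
Qed.

Lemma CC_q c : 0 < c -> CC (q c).
Proof.
  intros Hc t. unfold q; cbn [fst snd]. split; apply derivable_continuous_pt; apply ex_derive_Reals_0; auto_derive;
  pose proof (den_pos c t Hc); lra.
Qed.

Lemma CC_Q l : List.Forall (fun x => 0 < x) l -> CC (Q l).
Proof.
  induction l as [|c r IH]; intros Hl; simpl.
  - apply CC_const.
  - inversion Hl; subst. apply CC_mult; auto. apply CC_q; auto.
Qed.

Lemma ReQ_int l a b : List.Forall (fun x => 0 < x) l -> ex_RInt (fun t => fst (Q l t)) a b.
Proof.
  intros Hl. apply (ex_RInt_continuous (V:=R_CompleteNormedModule)). intros.
  apply continuity_pt_filterlim. apply (CC_Q l Hl z).
Qed.

Lemma int_q1 c n : 0 < c -> RInt (fun t => fst (Q (c :: nil) t)) (- n) n = 2 * atan (n / c).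
Proof.
  intros Hc.
  rewrite (RInt_ext _ (fun t => c / (c^2+t^2))).
  2:{ intros x _. simpl. ring. }
  apply is_RInt_unique.
  replace (2 * atan (n / c)) with (minus (atan (n / c)) (atan (- n / c))).
  2:{ unfold minus, plus, opp; simpl. replace (- n / c) with (- (n/c)) by (field; lra).
      rewrite atan_opp. ring. }
  apply (is_RInt_derive (V:=R_CompleteNormedModule) (fun t => atan (t / c))).
  - intros t _. apply is_derive_Reals.
    replace (c/(c^2+t^2)) with (/(1+(t/c)^2) * (/c)).
    2:{ field. pose proof (den_pos c t Hc). split; lra. }
    apply (derivable_pt_lim_comp (fun t => t/c) atan).
    + apply is_derive_Reals. auto_derive; [auto|]. field. lra.
    + apply derivable_pt_lim_atan.
  - intros t _. apply continuity_pt_filterlim.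
    apply derivable_continuous_pt; apply ex_derive_Reals_0; auto_derive. pose proof (den_pos c t Hc). lra.
Qed.
Lemma RInt_scal_R f a b k : ex_RInt f a b -> RInt (fun x => k * f x) a b = k * RInt f a b.
Proof. intros H. exact (RInt_scal f a b k H). Qed.

Lemma RInt_minus_R f h a b : ex_RInt f a b -> ex_RInt h a b ->
  RInt (fun x => f x - h x) a b = RInt f a b - RInt h a b.
Proof. intros H1 H2. exact (RInt_minus f h a b H1 H2). Qed.

Lemma RInt_plus_R f h a b : ex_RInt f a b -> ex_RInt h a b ->
  RInt (fun x => f x + h x) a b = RInt f a b + RInt h a b.
Proof. intros H1 H2. exact (RInt_plus f h a b H1 H2). Qed.

Lemma nat_large x : exists N, forall n, (N <= n)%nat -> x <= INR n.
Proof.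
  destruct (INR_unbounded x) as [N HN]. exists N. intros n Hn.
  apply le_INR in Hn. lra.
Qed.

Lemma Q_lim r : forall c1, List.Forall (fun x => 0 < x) (c1 :: r) -> NoDup (c1 :: r) ->
  Un_cv (fun n => RInt (fun t => fst (Q (c1 :: r) t)) (- INR n) (INR n))
        (match r with nil => PI | _ => 0 end).
Proof.
  induction r as [|c2 r IH]; intros c1 Hpos Hnd.
  - inversion Hpos; subst.
    apply cv_ext with (fun n => 2 * atan (INR n / c1)).
    { intros n. rewrite int_q1; auto. }
    intros e He. destruct (atan_lim (e/2)) as [M [HM HMx]]; [lra|].
    destruct (nat_large (M * c1)) as [N HN]. exists N. intros n Hn.
    specialize (HN n Hn). unfold Rdist.
    assert (M <= INR n / c1).
    { apply Rmult_le_reg_r with c1; auto. unfold Rdiv. rewrite Rmult_assoc, Rinv_l by lra. lra. }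
    specialize (HMx _ H). pose proof (atan_bound (INR n / c1)).
    rewrite Rabs_left by lra. lra.
  - inversion Hpos as [|? ? Hc1 Hpos']; subst. inversion Hpos' as [|? ? Hc2 Hpos'']; subst.
    apply NoDup_cons_iff in Hnd as [Hn1 Hnd']. apply NoDup_cons_iff in Hnd' as [Hn2 Hnd''].
    assert (Hne : c1 <> c2) by (intros ->; apply Hn1; left; auto).
    assert (HA := IH c1 (List.Forall_cons _ Hc1 Hpos'') (NoDup_cons _ (fun h => Hn1 (or_intror h)) Hnd'')).
    assert (HB := IH c2 (List.Forall_cons _ Hc2 Hpos'') (NoDup_cons _ Hn2 Hnd'')).
    replace 0 with (/(c2 - c1) * ((match r with nil => PI | _ => 0 end) - (match r with nil => PI | _ => 0 end))) by ring.
    apply cv_ext with (fun n => /(c2 - c1) * (RInt (fun t => fst (Q (c1 :: r) t)) (- INR n) (INR n) -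
                                          RInt (fun t => fst (Q (c2 :: r) t)) (- INR n) (INR n))).
    2:{ apply cv_scal. apply CV_minus; auto. }
    intros n.
    rewrite <- RInt_minus_R by (apply ReQ_int; constructor; auto).
    rewrite <- RInt_scal_R.
    2:{ apply (ex_RInt_minus (V:=R_NormedModule)); apply ReQ_int; constructor; auto. }
    apply RInt_ext. intros x _.
    change (Q (c1 :: c2 :: r) x) with (Cmult (q c1 x) (Cmult (q c2 x) (Q r x))).
    rewrite Cmult_assoc, q_pf by auto.
    simpl. ring.
Qed.
Fixpoint lst (al : R) (j : nat) : list R :=
  match j with O => nil | S j' => aa al (S j') :: lst al j' end.
Fixpoint prodA (al : R) (j : nat) : R :=
  match j with O => 1 | S j' => prodA al j' * aa al (S j') end.

Lemma fY_q c t : 0 < c -> fY c t = Cmult (RtoC c) (q c t).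
Proof.
  intros Hc. pose proof (den_pos c t Hc). unfold fY, q, Cmult, RtoC; cbn [fst snd]. f_equal; field; lra.
Qed.

Lemma fX_q c t : 0 < c -> fX c t = Cmult (RtoC c) (q c (-t)).
Proof.
  intros Hc. pose proof (den_pos c t Hc). unfold fX, q, Cmult, RtoC; cbn [fst snd].
  replace ((-t)^2) with (t^2) by ring. f_equal; field; lra.
Qed.

Lemma Rf_Q al j t : Rf al j t = Cmult (RtoC (prodA al j)) (Q (lst al j) t).
Proof.
  induction j as [|j IH]; simpl.
  - unfold RtoC, Cmult; simpl. f_equal; ring.
  - rewrite IH, fY_q by apply aa_pos. rewrite RtoC_mult. ring.
Qed.

Lemma Lf_Q al j t : Lf al j t = Cmult (RtoC (prodA al j)) (Q (lst al j) (-t)).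
Proof.
  induction j as [|j IH]; simpl.
  - unfold RtoC, Cmult; simpl. f_equal; ring.
  - rewrite IH, fX_q by apply aa_pos. rewrite RtoC_mult. ring.
Qed.

Lemma Q_opp l t : fst (Q l (-t)) = fst (Q l t) /\ snd (Q l (-t)) = - snd (Q l t).
Proof.
  induction l as [|c r [IH1 IH2]]; simpl.
  - split; ring.
  - unfold q, Cmult; cbn [fst snd]. rewrite IH1, IH2. replace (-t * (-t * 1)) with (t * (t * 1)) by ring. unfold Rdiv. split; ring.
Qed.

Lemma lst_in al j x : In x (lst al j) -> exists k, (1 <= k <= j)%nat /\ x = aa al k.
Proof.
  induction j as [|j IH]; simpl; [tauto|].
  intros [H|H].
  - exists (S j). split; [lia|auto].
  - destruct (IH H) as [k [Hk ->]]. exists k. split; [lia|auto].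
Qed.

Lemma lst_nodup al j : 0 < al -> NoDup (lst al j).
Proof.
  intros Hal. induction j as [|j IH]; simpl; constructor; auto.
  intros H. destruct (lst_in al j _ H) as [k [Hk Heq]].
  pose proof (aa_lt al k (S j) Hal ltac:(lia) ltac:(lia)). lra.
Qed.

Lemma lst_pos al j : List.Forall (fun x => 0 < x) (lst al j).
Proof. induction j; simpl; constructor; auto. apply aa_pos. Qed.

Lemma Rf_int_lim al j : 0 < al -> (2 <= j)%nat ->
  Un_cv (fun n => RInt (fun t => fst (Rf al j t)) (- INR n) (INR n)) 0.
Proof.
  intros Hal Hj.
  destruct j as [|[|j]]; [lia|lia|].
  pose proof (Q_lim (lst al (S j)) (aa al (S (S j))) (lst_pos al (S (S j))) (lst_nodup al (S (S j)) Hal)) as H.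
  simpl in H. replace 0 with (prodA al (S (S j)) * 0) by ring.
  apply cv_ext with (fun n => prodA al (S (S j)) * RInt (fun t => fst (Q (lst al (S (S j))) t)) (- INR n) (INR n)).
  2:{ apply cv_scal. exact H. }
  intros n. rewrite <- RInt_scal_R by (apply ReQ_int, lst_pos).
  apply RInt_ext. intros x _. rewrite Rf_Q, re_scal_l. reflexivity.
Qed.

Lemma Lf_int_lim al j : 0 < al -> (2 <= j)%nat ->
  Un_cv (fun n => RInt (fun t => fst (Lf al j t)) (- INR n) (INR n)) 0.
Proof.
  intros Hal Hj.
  destruct j as [|[|j]]; [lia|lia|].
  pose proof (Q_lim (lst al (S j)) (aa al (S (S j))) (lst_pos al (S (S j))) (lst_nodup al (S (S j)) Hal)) as H.
  simpl in H. replace 0 with (prodA al (S (S j)) * 0) by ring.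
  apply cv_ext with (fun n => prodA al (S (S j)) * RInt (fun t => fst (Q (lst al (S (S j))) t)) (- INR n) (INR n)).
  2:{ apply cv_scal. exact H. }
  intros n. rewrite <- RInt_scal_R by (apply ReQ_int, lst_pos).
  apply RInt_ext. intros x _. rewrite Lf_Q, re_scal_l. rewrite (proj1 (Q_opp _ x)). reflexivity.
Qed.
Definition T (al : R) (i j : nat) (n : nat) : R := /(2*PI) * RInt (g al i j) (- INR n) (INR n).
Definition SS (al : R) (i j : nat) (n : nat) : R := (/aa al i + /aa al j) * T al i j n.

Lemma T_rec al i j n :
  (/aa al (S i) + /aa al (S j)) * T al (S i) (S j) n =
  /aa al (S j) * T al i (S j) n + /aa al (S i) * T al (S i) j n.
Proof.
  unfold T.
  transitivity (/(2*PI) * RInt (fun t => (/aa al (S i) + /aa al (S j)) * g al (S i) (S j) t) (- INR n) (INR n)).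
  { rewrite RInt_scal_R by apply g_int. ring. }
  rewrite (RInt_ext _ (fun t => /aa al (S j) * g al i (S j) t + /aa al (S i) * g al (S i) j t)).
  2:{ intros x _. apply g_rec. }
  rewrite RInt_plus_R.
  2:{ apply (ex_RInt_scal (V:=R_NormedModule)). apply g_int. }
  2:{ apply (ex_RInt_scal (V:=R_NormedModule)). apply g_int. }
  rewrite !RInt_scal_R by apply g_int. ring.
Qed.

Lemma bingo_rec al i j : (i + j > 0)%nat ->
  bingo al (S i) (S j) = bingo al i (S j) * pstepX al i (S j) + bingo al (S i) j * pstepY al (S i) j.
Proof. intros H. destruct i, j; try lia; reflexivity. Qed.

Lemma bingo_0l al j : bingo al 0 j = 0.
Proof. reflexivity. Qed.

Lemma bingo_11 al : bingo al 1 1 = 1.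
Proof. reflexivity. Qed.

Lemma pX_eq al i j : pstepX al i j * (/aa al i + /aa al j) = /aa al j.
Proof.
  unfold pstepX. fold (aa al i). fold (aa al j). pose proof (aa_pos al i). pose proof (aa_pos al j).
  field. lra.
Qed.

Lemma pY_eq al i j : pstepY al i j * (/aa al i + /aa al j) = /aa al i.
Proof.
  unfold pstepY. fold (aa al i). fold (aa al j). pose proof (aa_pos al i). pose proof (aa_pos al j).
  field. lra.
Qed.

Lemma g_11 al t : g al 1 1 t = h1 t.
Proof. unfold g. rewrite Phi_11. reflexivity. Qed.

Lemma g_0j al j t : g al 0 j t = fst (Rf al j t).
Proof. unfold g, Phi. simpl Lf. rewrite Cmult_1_l. reflexivity. Qed.

Lemma g_i0 al i t : g al i 0 t = fst (Lf al i t).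
Proof. unfold g, Phi. simpl Rf. rewrite Cmult_1_r. reflexivity. Qed.

Lemma SS_11 al : Un_cv (SS al 1 1) 1.
Proof.
  apply cv_ext with (fun n => 2 * atan (INR n) / PI).
  { intros n. unfold SS, T. rewrite aa_1. rewrite (RInt_ext _ h1) by (intros; apply g_11).
    rewrite int_h1, atan_opp. field. apply PI_neq0. }
  intros e He. destruct (atan_lim (e * PI / 2)) as [M [HM HMx]].
  { pose proof PI_RGT_0. nra. }
  destruct (nat_large M) as [N HN]. exists N. intros n Hn.
  specialize (HMx _ (HN n Hn)). pose proof (atan_bound (INR n)). pose proof PI_RGT_0.
  unfold Rdist. replace (2 * atan (INR n) / PI - 1) with (- ((PI - 2 * atan (INR n)) / PI)) by (field; lra).
  rewrite Rabs_Ropp, Rabs_pos_eq.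
  2:{ apply Rdiv_le_0_compat; lra. }
  apply Rmult_lt_reg_r with PI; auto. unfold Rdiv. rewrite Rmult_assoc, Rinv_l by lra. lra.
Qed.

Lemma main_identity al : 1 < al -> forall i j, Un_cv (SS al (S i) (S j)) (bingo al (S i) (S j)).
Proof.
  intros Hal. induction i as [|i IHi]; intros j; induction j as [|j IHj].
  - rewrite bingo_11. apply SS_11.
  -
    rewrite bingo_rec by lia. rewrite bingo_0l, Rmult_0_l, Rplus_0_l.
    replace (bingo al 1 (S j) * pstepY al 1 (S j)) with
      (/aa al (S (S j)) * 0 + pstepY al 1 (S j) * bingo al 1 (S j)) by ring.
    apply cv_ext with (fun n => /aa al (S (S j)) * T al 0 (S (S j)) n + pstepY al 1 (S j) * SS al 1 (S j) n).
    { intros n. unfold SS. rewrite (T_rec al 0 (S j) n). rewrite <- Rmult_assoc, pY_eq. ring. }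
    apply CV_plus; apply cv_scal; auto.
    replace 0 with (/(2*PI) * 0) by ring. unfold T. apply cv_scal.
    apply cv_ext with (fun n => RInt (fun t => fst (Rf al (S (S j)) t)) (- INR n) (INR n)).
    { intros n. apply RInt_ext. intros; symmetry; apply g_0j. }
    apply Rf_int_lim; [lra|lia].
  -
    rewrite bingo_rec by lia.
    replace (bingo al (S (S i)) 0) with 0 by reflexivity. rewrite Rmult_0_l, Rplus_0_r.
    replace (bingo al (S i) 1 * pstepX al (S i) 1) with
      (pstepX al (S i) 1 * bingo al (S i) 1 + /aa al (S (S i)) * 0) by ring.
    apply cv_ext with (fun n => pstepX al (S i) 1 * SS al (S i) 1 n + /aa al (S (S i)) * T al (S (S i)) 0 n).
    { intros n. unfold SS. rewrite (T_rec al (S i) 0 n). rewrite <- Rmult_assoc, pX_eq. ring. }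
    apply CV_plus; apply cv_scal; auto.
    replace 0 with (/(2*PI) * 0) by ring. unfold T. apply cv_scal.
    apply cv_ext with (fun n => RInt (fun t => fst (Lf al (S (S i)) t)) (- INR n) (INR n)).
    { intros n. apply RInt_ext. intros; symmetry; apply g_i0. }
    apply Lf_int_lim; [lra|lia].
  - rewrite bingo_rec by lia.
    replace (bingo al (S i) (S (S j)) * pstepX al (S i) (S (S j)) + bingo al (S (S i)) (S j) * pstepY al (S (S i)) (S j))
      with (pstepX al (S i) (S (S j)) * bingo al (S i) (S (S j)) + pstepY al (S (S i)) (S j) * bingo al (S (S i)) (S j)) by ring.
    apply cv_ext with (fun n => pstepX al (S i) (S (S j)) * SS al (S i) (S (S j)) n + pstepY al (S (S i)) (S j) * SS al (S (S i)) (S j) n).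
    { intros n. unfold SS. rewrite (T_rec al (S i) (S j) n). rewrite <- !Rmult_assoc, pX_eq, pY_eq. ring. }
    apply CV_plus; apply cv_scal; auto.
Qed.
Lemma int_cv_bound f I M : (forall x y, ex_RInt f x y) -> (forall t, Rabs (f t) <= h1 t) ->
  Un_cv (fun n => RInt f (- INR n) (INR n)) I -> 0 <= M ->
  Rabs (RInt f (- M) M - I) <= PI - 2 * atan M.
Proof.
  intros Hint Hf Hcv HM.
  destruct (nat_large M) as [N HN].
  rewrite <- Rabs_Ropp. replace (- (RInt f (- M) M - I)) with (I - RInt f (- M) M) by ring.
  apply (cv_abs_le _ I (RInt f (- M) M) _ N Hcv).
  intros n Hn. apply tail_bound; auto; specialize (HN n Hn); lra.
Qed.

Lemma int_cv_exists f : (forall x y, ex_RInt f x y) -> (forall t, Rabs (f t) <= h1 t) ->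
  { I | Un_cv (fun n => RInt f (- INR n) (INR n)) I }.
Proof.
  intros Hint Hf. apply Stdlib.Reals.Rcomplete.R_complete.
  intros e He. destruct (atan_lim (e/4)) as [M [HM HMx]]; [lra|].
  destruct (nat_large M) as [N HN]. exists N. intros n m Hn Hm.
  assert (H1 := tail_bound f (- INR n) (INR n) (INR N) ltac:(apply le_INR in Hn; lra) (pos_INR N)
                  ltac:(apply le_INR in Hn; lra) Hint Hf).
  assert (H2 := tail_bound f (- INR m) (INR m) (INR N) ltac:(apply le_INR in Hm; lra) (pos_INR N)
                  ltac:(apply le_INR in Hm; lra) Hint Hf).
  specialize (HMx (INR N) (HN N (le_n _))).
  unfold Rdist.
  replace (RInt f (- INR n) (INR n) - RInt f (- INR m) (INR m)) with
    ((RInt f (- INR n) (INR n) - RInt f (- INR N) (INR N)) - (RInt f (- INR m) (INR m) - RInt f (- INR N) (INR N))) by ring.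
  eapply Rle_lt_trans; [apply Rabs_triang|]. rewrite Rabs_Ropp. lra.
Qed.

Lemma pp_nonneg al t n : 0 <= partial_prod al t n.
Proof.
  induction n; simpl; [lra|]. apply Rmult_le_pos; auto.
  unfold npow, Rpower. pose proof (exp_pos (2 * al * ln (INR (S n)))).
  apply Rdiv_le_0_compat; nra.
Qed.

Lemma g_diag al m t : g al m m t = partial_prod al t m.
Proof. unfold g. rewrite Phi_diag. reflexivity. Qed.

Lemma g_contpt al i j t : continuity_pt (g al i j) t.
Proof. unfold g, Phi. apply (CC_mult (Lf al i) (Rf al j) (CC_Lf al i) (CC_Rf al j) t). Qed.

Lemma g_diff al m i j t : (m <= i)%nat -> (m <= j)%nat ->
  Rabs (g al i j t - g al m m t) <= Rabs t * ((sa al i - sa al m) + (sa al j - sa al m)).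
Proof.
  intros Hi Hj. eapply Rle_trans; [|apply (Phi_diff al m i j t Hi Hj)].
  unfold g. eapply Rle_trans; [|apply re_le_Cmod]. right. reflexivity.
Qed.
Lemma sa_le_l al l i : Un_cv (sa al) l -> sa al i <= l.
Proof. intros Hl. apply (cv_ge_const (sa al) l (sa al i) i Hl). intros; apply sa_mono; auto. Qed.

Lemma g_close al l m i j t : Un_cv (sa al) l -> (m <= i)%nat -> (m <= j)%nat ->
  Rabs (g al i j t - g al m m t) <= 2 * Rabs t * (l - sa al m).
Proof.
  intros Hl Hi Hj. eapply Rle_trans; [apply g_diff; auto|].
  pose proof (sa_le_l al l i Hl). pose proof (sa_le_l al l j Hl). pose proof (Rabs_pos t). nra.
Qed.

Lemma tail_small al l eps : Un_cv (sa al) l -> 0 < eps -> exists N, forall m, (N <= m)%nat -> l - sa al m < eps.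
Proof.
  intros Hl He. destruct (Hl eps He) as [N HN]. exists N. intros m Hm. specialize (HN m Hm).
  unfold Rdist in HN. apply Rabs_def2 in HN. lra.
Qed.

Lemma pp_cauchy al l t : Un_cv (sa al) l -> Cauchy_crit (partial_prod al t).
Proof.
  intros Hl e He.
  destruct (tail_small al l (e / (4 * (Rabs t + 1))) Hl) as [N HN].
  { apply Rdiv_lt_0_compat; [lra|]. pose proof (Rabs_pos t); lra. }
  exists N. intros n m Hn Hm. unfold Rdist.
  pose proof (g_close al l N n n t Hl Hn Hn). pose proof (g_close al l N m m t Hl Hm Hm).
  rewrite !g_diag in H, H0.
  specialize (HN N (le_n _)). pose proof (sa_le_l al l N Hl).
  assert (Hb : 2 * Rabs t * (l - sa al N) < e / 2).
  { assert (0 < Rabs t + 1) by (pose proof (Rabs_pos t); lra).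
    assert (l - sa al N < e / (4 * (Rabs t + 1))) by auto.
    apply Rmult_lt_compat_l with (r := 4 * (Rabs t + 1)) in H3; [|lra].
    replace (4 * (Rabs t + 1) * (e / (4 * (Rabs t + 1)))) with e in H3 by (field; lra).
    pose proof (Rabs_pos t). nra. }
  replace (partial_prod al t n - partial_prod al t m) with
    ((partial_prod al t n - partial_prod al t N) - (partial_prod al t m - partial_prod al t N)) by ring.
  eapply Rle_lt_trans; [apply Rabs_triang|]. rewrite Rabs_Ropp. lra.
Qed.


Lemma F_close al l (F : R -> R) m t : Un_cv (sa al) l -> (forall t, Un_cv (partial_prod al t) (F t)) ->
  Rabs (F t - partial_prod al t m) <= 2 * Rabs t * (l - sa al m).
Proof.
  intros Hl HF. apply (cv_abs_le _ _ _ _ m (HF t)).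
  intros n Hn. rewrite <- !g_diag. apply g_close; auto.
Qed.

Lemma F_bound al (F : R -> R) t : (forall t, Un_cv (partial_prod al t) (F t)) ->
  0 <= F t /\ F t <= h1 t.
Proof.
  intros HF. split.
  - apply (cv_ge_const _ _ 0 0 (HF t)). intros; apply pp_nonneg.
  - apply (cv_le_const _ _ (h1 t) 1 (HF t)). intros n Hn. rewrite <- g_diag.
    pose proof (g_bound al n n t Hn Hn). apply Rabs_le_between in H. unfold h1. lra.
Qed.

Lemma F_abs al (F : R -> R) t : (forall t, Un_cv (partial_prod al t) (F t)) -> Rabs (F t) <= h1 t.
Proof. intros HF. destruct (F_bound al F t HF). rewrite Rabs_pos_eq; auto. Qed.

Lemma F_cont al l (F : R -> R) t0 : Un_cv (sa al) l -> (forall t, Un_cv (partial_prod al t) (F t)) ->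
  continuity_pt F t0.
Proof.
  intros Hl HF e He.
  assert (Ht0 : 0 < Rabs t0 + 1) by (pose proof (Rabs_pos t0); lra).
  destruct (tail_small al l (e / (8 * (Rabs t0 + 1))) Hl) as [m Hm].
  { apply Rdiv_lt_0_compat; lra. }
  specialize (Hm m (le_n _)).
  destruct (g_contpt al m m t0 (e/3)) as [d [Hd Hdd]]; [lra|].
  exists (Rmin 1 d). split. { apply Rmin_glb_lt; lra. }
  intros x [HD Hx]. simpl in *. unfold R_dist in *.
  assert (Hx1 : Rabs (x - t0) < 1) by (eapply Rlt_le_trans; [exact Hx| apply Rmin_l]).
  assert (Hxd : Rabs (x - t0) < d) by (eapply Rlt_le_trans; [exact Hx| apply Rmin_r]).
  assert (Hg : Rabs (g al m m x - g al m m t0) < e/3).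
  { apply Hdd. split; auto. }
  rewrite !g_diag in Hg.
  pose proof (F_close al l F m x Hl HF). pose proof (F_close al l F m t0 Hl HF).
  pose proof (sa_le_l al l m Hl).
  assert (Hxa : Rabs x <= Rabs t0 + 1).
  { replace x with ((x - t0) + t0) by ring. eapply Rle_trans; [apply Rabs_triang|]. lra. }
  assert (Htail : 2 * (Rabs t0 + 1) * (l - sa al m) < e / 3).
  { apply Rmult_lt_compat_l with (r := 8 * (Rabs t0 + 1)) in Hm; [|lra].
    replace (8 * (Rabs t0 + 1) * (e / (8 * (Rabs t0 + 1)))) with e in Hm by (field; lra). nra. }
  assert (2 * Rabs x * (l - sa al m) < e/3) by (pose proof (Rabs_pos x); nra).
  assert (2 * Rabs t0 * (l - sa al m) < e/3) by (pose proof (Rabs_pos t0); nra).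
  replace (F x - F t0) with ((F x - partial_prod al x m) + (partial_prod al x m - partial_prod al t0 m)
      - (F t0 - partial_prod al t0 m)) by ring.
  eapply Rle_lt_trans; [apply Rabs_triang|]. rewrite Rabs_Ropp.
  eapply Rle_lt_trans; [apply Rplus_le_compat_r; apply Rabs_triang|]. lra.
Qed.

Lemma F_int al l (F : R -> R) a b : Un_cv (sa al) l -> (forall t, Un_cv (partial_prod al t) (F t)) ->
  ex_RInt F a b.
Proof.
  intros Hl HF. apply (ex_RInt_continuous (V:=R_CompleteNormedModule)). intros.
  apply continuity_pt_filterlim. apply (F_cont al l F z Hl HF).
Qed.
Lemma I_pos al l (F : R -> R) I : Un_cv (sa al) l -> (forall t, Un_cv (partial_prod al t) (F t)) ->
  Un_cv (fun n => RInt F (- INR n) (INR n)) I -> 0 < I.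
Proof.
  intros Hl HF HI.
  assert (Hl0 : 0 <= l) by (apply (sa_le_l al l 0 Hl)).
  set (d := / (4 * l + 1)).
  assert (Hd : 0 < d) by (apply Rinv_0_lt_compat; lra).
  assert (Hd1 : d <= 1) by (unfold d; rewrite <- Rinv_1; apply Rinv_le_contravar; lra).
  assert (Hld : 2 * d * l <= 1/2).
  { unfold d. apply Rmult_le_reg_r with (4*l+1); [lra|].
    replace (2 * / (4 * l + 1) * l * (4 * l + 1)) with (2*l) by (field; lra). lra. }
  assert (HFd : forall t, -d <= t <= d -> 1/2 <= F t).
  { intros t Ht. pose proof (F_close al l F 0 t Hl HF) as H. simpl in H.
    rewrite Rminus_0_r in H. apply Rabs_le_between in H.
    assert (Rabs t <= d) by (apply Rabs_le; lra). nra. }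
  apply Rlt_le_trans with d; auto.
  apply (cv_ge_const _ I d 1 HI). intros n Hn.
  assert (Hn1 : 1 <= INR n) by (apply le_INR in Hn; simpl in Hn; lra).
  assert (Hint := fun a b => F_int al l F a b Hl HF).
  rewrite <- (RInt_Chasles F (- INR n) (- d) (INR n)) by auto.
  rewrite <- (RInt_Chasles F (- d) d (INR n)) by auto.
  change (plus (RInt F (- INR n) (- d)) (plus (RInt F (- d) d) (RInt F d (INR n)))) with
     (RInt F (- INR n) (- d) + (RInt F (- d) d + RInt F d (INR n))).
  assert (0 <= RInt F (- INR n) (- d)).
  { apply RInt_ge_0; [lra|auto|]. intros; apply (F_bound al F x HF). }
  assert (0 <= RInt F d (INR n)).
  { apply RInt_ge_0; [lra|auto|]. intros; apply (F_bound al F x HF). }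
  assert (d <= RInt F (- d) d).
  { assert (Hc : RInt (fun _ => 1/2) (- d) d = d).
    { rewrite RInt_const. unfold scal; simpl; unfold mult; simpl. field. }
    rewrite <- Hc at 1.
    apply RInt_le; [lra| |auto|].
    - apply (ex_RInt_const (V:=R_NormedModule)).
    - intros x Hx. apply HFd. lra. }
  lra.
Qed.
Lemma g_int_cv al i j : 1 < al ->
  Un_cv (fun n => RInt (g al (S i) (S j)) (- INR n) (INR n))
        (2 * PI * (bingo al (S i) (S j) / (/aa al (S i) + /aa al (S j)))).
Proof.
  intros Hal. pose proof (aa_pos al (S i)). pose proof (aa_pos al (S j)).
  assert (Hs : 0 < /aa al (S i) + /aa al (S j)).
  { pose proof (Rinv_0_lt_compat _ H). pose proof (Rinv_0_lt_compat _ H0). lra. }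
  pose proof PI_RGT_0.
  replace (2 * PI * (bingo al (S i) (S j) / (/aa al (S i) + /aa al (S j)))) with
    ((2 * PI / (/aa al (S i) + /aa al (S j))) * bingo al (S i) (S j)) by (field; lra).
  apply cv_ext with (fun n => (2 * PI / (/aa al (S i) + /aa al (S j))) * SS al (S i) (S j) n).
  { intros n. unfold SS, T. field. lra. }
  apply cv_scal. apply main_identity; auto.
Qed.

Lemma asym al l (F : R -> R) I : 1 < al -> Un_cv (sa al) l -> (forall t, Un_cv (partial_prod al t) (F t)) ->
  Un_cv (fun n => RInt F (- INR n) (INR n)) I -> 0 < I ->
  forall eps, 0 < eps -> exists N : nat, forall i j : nat, (N <= i)%nat -> (N <= j)%nat ->
    Rabs (bingo al i j / (I / (2 * PI) * (Rpower (INR i) (- al) + Rpower (INR j) (- al))) - 1) < eps.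
Proof.
  intros Hal Hl HF HI HIp e He.
  pose proof PI_RGT_0.
  destruct (atan_lim (e * I / 8)) as [M [HM HMx]]. { nra. }
  destruct (nat_large M) as [n0 Hn0]. specialize (Hn0 n0 (le_n _)).
  specialize (HMx _ Hn0).
  set (n := INR n0) in *.
  assert (Hnpos : 0 <= n) by apply pos_INR.
  destruct (tail_small al l (e * I / (2 * (8 * n * n + 1))) Hl) as [m0 Hm0].
  { apply Rdiv_lt_0_compat; nra. }
  exists (max m0 1). intros i j Hi Hj.
  set (m := max m0 1) in *.
  specialize (Hm0 m ltac:(lia)).
  assert (Hsm : sa al m <= l) by (apply sa_le_l; auto).
  destruct i as [|i]; [lia|]. destruct j as [|j]; [lia|].
  set (K := bingo al (S i) (S j) / (/aa al (S i) + /aa al (S j))).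
  pose proof (aa_pos al (S i)) as Ha. pose proof (aa_pos al (S j)) as Hb.
  assert (Hs : 0 < /aa al (S i) + /aa al (S j)).
  { pose proof (Rinv_0_lt_compat _ Ha). pose proof (Rinv_0_lt_compat _ Hb). lra. }
  assert (Hgint : forall x y, ex_RInt (g al (S i) (S j)) x y) by (intros; apply g_int).
  assert (Hgb : forall t, Rabs (g al (S i) (S j) t) <= h1 t) by (intros; apply g_bound; lia).
  assert (HFint : forall x y, ex_RInt F x y) by (intros; apply (F_int al l F x y Hl HF)).
  assert (HFb : forall t, Rabs (F t) <= h1 t) by (intros; apply (F_abs al F t HF)).
  pose proof (int_cv_bound _ _ n Hgint Hgb (g_int_cv al i j Hal) Hnpos) as B1.
  pose proof (int_cv_bound _ _ n HFint HFb HI Hnpos) as B2. fold K in B1.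
  assert (B3 : Rabs (RInt (g al (S i) (S j)) (- n) n - RInt F (- n) n) <= (n - - n) * (4 * n * (l - sa al m))).
  { rewrite <- RInt_minus_R by auto. apply abs_RInt_le_const; [lra| |].
    - apply (ex_RInt_minus (V:=R_NormedModule)); auto.
    - intros t Ht. assert (Hta : Rabs t <= n) by (apply Rabs_le; lra).
      pose proof (g_close al l m (S i) (S j) t Hl ltac:(lia) ltac:(lia)) as C1.
      pose proof (F_close al l F m t Hl HF) as C2. rewrite <- g_diag in C2.
      replace (g al (S i) (S j) t - F t) with
        ((g al (S i) (S j) t - g al m m t) - (F t - g al m m t)) by ring.
      eapply Rle_trans; [apply Rabs_triang|]. rewrite Rabs_Ropp.
      assert (0 <= l - sa al m) by lra. pose proof (Rabs_pos t). nra. }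
  assert (Htail : (n - - n) * (4 * n * (l - sa al m)) < e * I / 2).
  { replace ((n - - n) * (4 * n * (l - sa al m))) with ((8 * n * n) * (l - sa al m)) by ring.
    assert (0 <= l - sa al m) by lra.
    apply Rle_lt_trans with ((8 * n * n + 1) * (l - sa al m)). { nra. }
    apply Rmult_lt_compat_l with (r := 8 * n * n + 1) in Hm0; [|nra].
    replace ((8 * n * n + 1) * (e * I / (2 * (8 * n * n + 1)))) with (e * I / 2) in Hm0 by (field; nra).
    lra. }
  assert (HX : Rabs (2 * PI * K - I) < e * I).
  { replace (2 * PI * K - I) with
      (- (RInt (g al (S i) (S j)) (- n) n - 2 * PI * K) +
       (RInt (g al (S i) (S j)) (- n) n - RInt F (- n) n) + (RInt F (- n) n - I)) by ring.
    eapply Rle_lt_trans; [apply Rabs_triang|].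
    eapply Rle_lt_trans; [apply Rplus_le_compat_r; apply Rabs_triang|].
    rewrite Rabs_Ropp. lra. }
  unfold Rpower at 1 2. fold (Rpower (INR (S i)) (- al)). fold (Rpower (INR (S j)) (- al)).
  rewrite !Rpower_Ropp. fold (npow (S i) al). fold (npow (S j) al). fold (aa al (S i)). fold (aa al (S j)).
  replace (bingo al (S i) (S j) / (I / (2 * PI) * (/ aa al (S i) + / aa al (S j))) - 1) with
    ((2 * PI * K - I) / I).
  2:{ unfold K. field. lra. }
  unfold Rdiv. rewrite Rabs_mult, (Rabs_pos_eq (/ I)) by (left; apply Rinv_0_lt_compat; lra).
  apply Rmult_lt_reg_r with I; auto. rewrite Rmult_assoc, Rinv_l by lra. lra.
Qed.
Theorem theoremt3 (alpha : R) (halpha : 1 < alpha) :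
  exists (F : R -> R) (I : R),
    (forall t, Un_cv (partial_prod alpha t) (F t)) /\
    improper_integral_R F I /\
    0 < I /\
    (let beta := I / (2 * PI) in
     (forall eps, 0 < eps -> exists N : nat, forall i j : nat,
        (N <= i)%nat -> (N <= j)%nat ->
        Rabs (bingo alpha i j /
              (beta * (Rpower (INR i) (- alpha) + Rpower (INR j) (- alpha))) - 1)
          < eps) /\
     (forall eps, 0 < eps -> exists N : nat, forall n : nat,
        (N <= n)%nat ->
        Rabs (bingo alpha n n / (2 * beta * Rpower (INR n) (- alpha)) - 1) < eps)).
Proof.
  destruct (sa_cv alpha halpha) as [l Hl].
  pose (F := fun t => proj1_sig (Stdlib.Reals.Rcomplete.R_complete _ (pp_cauchy alpha l t Hl))).
  assert (HF : forall t, Un_cv (partial_prod alpha t) (F t)).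
  { intros t. exact (proj2_sig (Stdlib.Reals.Rcomplete.R_complete _ (pp_cauchy alpha l t Hl))). }
  assert (HFint : forall x y, ex_RInt F x y) by (intros; apply (F_int alpha l F x y Hl HF)).
  assert (HFb : forall t, Rabs (F t) <= h1 t) by (intros; apply (F_abs alpha F t HF)).
  destruct (int_cv_exists F HFint HFb) as [I HI].
  assert (HIp : 0 < I) by (apply (I_pos alpha l F I Hl HF HI)).
  exists F, I. split; [exact HF|]. split.
  { split.
    - intros a b. constructor. apply ex_RInt_Reals_0, HFint.
    - intros eps He. destruct (atan_lim (eps/4)) as [M [HM HMx]]; [lra|].
      exists M. intros a b Ha Hb. exists (ex_RInt_Reals_0 _ _ _ (HFint a b)).
      rewrite <- RInt_Reals.
      pose proof (tail_bound F a b M Ha (Rlt_le _ _ HM) Hb HFint HFb) as B1.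
      pose proof (int_cv_bound F I M HFint HFb HI (Rlt_le _ _ HM)) as B2.
      specialize (HMx M (Rle_refl _)).
      replace (RInt F a b - I) with ((RInt F a b - RInt F (- M) M) + (RInt F (- M) M - I)) by ring.
      eapply Rle_lt_trans; [apply Rabs_triang|]. lra. }
  split; [exact HIp|].
  intros beta. subst beta. split.
  - apply (asym alpha l F I halpha Hl HF HI HIp).
  - intros eps He. destruct (asym alpha l F I halpha Hl HF HI HIp eps He) as [N HN].
    exists N. intros n Hn. specialize (HN n n Hn Hn).
    replace (2 * (I / (2 * PI)) * Rpower (INR n) (- alpha)) with
      (I / (2 * PI) * (Rpower (INR n) (- alpha) + Rpower (INR n) (- alpha))) by ring.
    exact HN.
Qed.
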